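(* Let $p$ be a prime, $q$ a power of $p$, $n\ge1$ odd, $m=\frac{q^n+1}{q+1}$. Let $\Sigma$ be the set of pairs $(H,M)$ such that $H\le A(P_\infty)$ and $M\le\mu$ are subgroups with $M^m:=\{d^m:d\in M\}=\phi(H)$. For a subgroup $G\le B(Q_\infty)$ set $\Xi(G)=(\pi(G),\pi_d(G))$. Then $\Xi$ is a bijection from the set of subgroups of $B(Q_\infty)$ onto $\Sigma$.
   Context: Let $\mathcal C_n=\mathbb{F}_{q^{2n}}(x,y,z)$ be the function field defined by $x^q+x=y^{q+1}$ and $z^m=y^{q^2}-y$. Let $A(P_\infty)$ be the group of symbols $[a,b,c]$ with $a\in\mathbb{F}_{q^2}^*$, $b,c\in\mathbb{F}_{q^2}$, $c^q+c=b^{q+1}$, with group law $[a',b',c']\circ[a,b,c]=[a'a,ab'+b,a^{q+1}c'+ab^qb'+c]$ (the automorphisms $x\mapsto a^{q+1}x+ab^qy+c$, $y\mapsto ay+b$ of the Hermitian function field $\mathbb{F}_{q^2}(x,y)$), and $\phi:A(P_\infty)\to\mathbb{F}_{q^2}^*$, $[a,b,c]\mapsto a$. Let $B(Q_\infty)$ be the group of automorphisms $[a,b,c,d]$ of $\mathcal C_n$ given by $x\mapsto a^{q+1}x+ab^qy+c$, $y\mapsto ay+b$, $z\mapsto dz$, where $a\in\mathbb{F}_{q^2}^*$, $b,c\in\mathbb{F}_{q^2}$, $c^q+c=b^{q+1}$, $d\in\mathbb{F}_{q^{2n}}$, $d^m=a$; its group law is $[a',b',c',d']\circ[a,b,c,d]=[a'a,ab'+b,a^{q+1}c'+ab^qb'+c,d'd]$.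 Let $\mu\le\mathbb{F}_{q^{2n}}^*$ be the group of $(q^n+1)(q-1)$-th roots of unity. Define $\pi:B(Q_\infty)\to A(P_\infty)$, $[a,b,c,d]\mapsto[a,b,c]$, and $\pi_d:B(Q_\infty)\to\mu$, $[a,b,c,d]\mapsto d$. *)

(* Defs.v *)
From HB Require Import structures.
From mathcomp Require Import all_boot all_order all_algebra all_field.
Set Implicit Arguments. Unset Strict Implicit. Unset Printing Implicit Defensive.
Import GRing.Theory.
Local Open Scope ring_scope.

(* F plays the role of F_{q^{2n}}; F_{q^2} is its subfield {x | x^(q^2) = x}. *)
Section Defs.
Variables (F : finFieldType) (q n : nat).

Definition inFq2 (x : F) : bool := x ^+ (q ^ 2) == x.

Definition m_of : nat := ((q ^ n + 1) %/ (q + 1))%N.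

Definition Acar : {set F * F * F} :=
  [set t | let: (a, b, c) := t in
     [&& a != 0, inFq2 a, inFq2 b, inFq2 c & c ^+ q + c == b ^+ q.+1]].

Definition Aid : F * F * F := (1, 0, 0).

Definition Amul (t' t : F * F * F) : F * F * F :=
  let: (a', b', c') := t' in let: (a, b, c) := t in
  (a' * a, a * b' + b, a ^+ q.+1 * c' + a * b ^+ q * b' + c).

Definition Bcar : {set F * F * F * F} :=
  [set t | let: (a, b, c, d) := t in
     [&& a != 0, inFq2 a, inFq2 b, inFq2 c, c ^+ q + c == b ^+ q.+1
       & d ^+ m_of == a]].

Definition Bid : F * F * F * F := (1, 0, 0, 1).

Definition Bmul (t' t : F * F * F * F) : F * F * F * F :=
  let: (a', b', c', d') := t' in let: (a, b, c, d) := t in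
  (a' * a, a * b' + b, a ^+ q.+1 * c' + a * b ^+ q * b' + c, d' * d).

Definition mu : {set F} := [set d | d ^+ ((q ^ n + 1) * (q - 1)) == 1].

Definition is_subgroup_A (H : {set F * F * F}) : Prop :=
  [/\ H \subset Acar, Aid \in H,
      {in H &, forall x y, Amul x y \in H}
    & {in H, forall x, exists2 y, y \in H & Amul y x = Aid}].

Definition is_subgroup_B (G : {set F * F * F * F}) : Prop :=
  [/\ G \subset Bcar, Bid \in G,
      {in G &, forall x y, Bmul x y \in G}
    & {in G, forall x, exists2 y, y \in G & Bmul y x = Bid}].

Definition is_subgroup_mu (M : {set F}) : Prop :=
  [/\ M \subset mu, 1 \in M,
      {in M &, forall x y, x * y \in M}
    & {in M, forall x, exists2 y, y \in M & y * x = 1}].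

Definition phi (t : F * F * F) : F := t.1.1.
Definition pi (t : F * F * F * F) : F * F * F := t.1.
Definition pi_d (t : F * F * F * F) : F := t.2.

Definition Sigma (HM : {set F * F * F} * {set F}) : Prop :=
  let: (H, M) := HM in
  [/\ is_subgroup_A H, is_subgroup_mu M
    & [set d ^+ m_of | d in M] = phi @: H].

Definition Xi (G : {set F * F * F * F}) : {set F * F * F} * {set F} :=
  (pi @: G, pi_d @: G).

End Defs.

Arguments is_subgroup_B F q n G : clear implicits.
Arguments is_subgroup_A F q H : clear implicits.
Arguments is_subgroup_mu F q n M : clear implicits.
Arguments Sigma F q n HM : clear implicits.
Arguments Xi F G : clear implicits.

(* Main.v *)
Require Import Defs.
From HB Require Import structures.
From mathcomp Require Import all_boot all_order all_algebra all_field.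
From mathcomp Require Import ring zify.
Import GRing.Theory.
Set Implicit Arguments. Unset Strict Implicit. Unset Printing Implicit Defensive.
Local Open Scope ring_scope.

Section Aux.
Variables (F : finFieldType) (q : nat).
Hypothesis hq0 : (0 < q)%N.
Hypothesis frob : forall x y : F, (x + y) ^+ q = x ^+ q + y ^+ q.

Lemma AmulA (x y z : F * F * F) :
  Amul q x (Amul q y z) = Amul q (Amul q x y) z.
Proof.
case: x => [[a1 b1] c1]; case: y => [[a2 b2] c2]; case: z => [[a3 b3] c3].
rewrite /Amul; congr (_, _, _); first ring; first ring.
rewrite frob !exprMn !exprS; ring.
Qed.

Lemma Amul1x (x : F * F * F) : Amul q (Aid F) x = x.
Proof. case: x => [[a b] c]; rewrite /Amul /Aid; congr (_, _, _); ring. Qed.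

Lemma Amulx1 (x : F * F * F) : Amul q x (Aid F) = x.
Proof.
case: x => [[a b] c]; rewrite /Amul /Aid.
have -> : (0 : F) ^+ q = 0 by rewrite expr0n eqn0Ngt hq0.
rewrite expr1n; congr (_, _, _); ring.
Qed.

Fixpoint Apow (x : F * F * F) (j : nat) : F * F * F :=
  if j is j'.+1 then Amul q x (Apow x j') else Aid F.

Lemma Apow_add x i j : Apow x (i + j) = Amul q (Apow x i) (Apow x j).
Proof.
elim: i => [|i IH]; first by rewrite add0n [Apow x 0]/= Amul1x.
by rewrite addSn [Apow x (i + j).+1]/= [Apow x i.+1]/= IH AmulA.
Qed.

Lemma Apow_mul x i j : Apow x (i * j) = Apow (Apow x i) j.
Proof.
elim: j => [|j IH]; first by rewrite muln0.
by rewrite mulnS Apow_add IH.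
Qed.

Lemma Apow_id j : Apow (Aid F) j = Aid F.
Proof. by elim: j => [|j IH] //; rewrite -[Apow _ j.+1]/(Amul q (Aid F) (Apow (Aid F) j)) IH Amul1x. Qed.

Lemma Apow_unip1 b c j : exists cj, Apow (1, b, c) j = (1, j%:R * b, cj).
Proof.
elim: j => [|j [cj IH]] /=; first by exists 0; rewrite mul0r.
rewrite IH /Amul; eexists; congr (_, _, _); first ring.
rewrite -natr1; ring.
Qed.

Lemma Apow_unip0 c j : Apow (1, 0, c) j = (1, 0, j%:R * c).
Proof.
elim: j => [|j IH] /=; first by rewrite mul0r.
rewrite IH /Amul; congr (_, _, _); first ring; first ring.
rewrite -natr1 expr1n; ring.
Qed.

Lemma Apow_pp (p : nat) (u : F * F * F) :
  (p%:R : F) = 0 -> u.1.1 = 1 -> Apow u (p * p) = Aid F.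
Proof.
move=> hp; case: u => [[a b] c] /= ->.
have [cj E] := Apow_unip1 b c p.
by rewrite Apow_mul E hp mul0r Apow_unip0 hp mul0r.
Qed.

Fixpoint Bpow (x : F * F * F * F) (j : nat) : F * F * F * F :=
  if j is j'.+1 then Bmul q x (Bpow x j') else Bid F.

Lemma Bmul_pair (t t' : F * F * F * F) :
  Bmul q t t' = (Amul q (Defs.pi t) (Defs.pi t'), pi_d t * pi_d t').
Proof. by case: t => [[[a b] c] d]; case: t' => [[[a' b'] c'] d']. Qed.

Lemma Bpow_pair (t : F * F * F * F) j :
  Bpow t j = (Apow (Defs.pi t) j, pi_d t ^+ j).
Proof.
elim: j => [|j IH] //=; rewrite Bmul_pair IH /= exprS //.
Qed.

Lemma phi_Amul (x y : F * F * F) : phi (Amul q x y) = phi x * phi y.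
Proof. by case: x => [[a b] c]; case: y => [[a' b'] c']. Qed.

End Aux.

Lemma ApowS (F : finFieldType) q (x : F * F * F) j :
  Apow q x j.+1 = Amul q x (Apow q x j).
Proof. by []. Qed.

Lemma dvd_odd (q n : nat) : (0 < q)%N -> odd n -> (q + 1 %| q ^ n + 1)%N.
Proof.
move=> q0 hn; rewrite -(odd_double_half n) hn add1n addn1.
elim: n./2 => [|j IH]; first by rewrite double0 expn1 addn1.
have E : (q ^ (j.+1).*2.+1 + 1 + q.+1 * q.-1 = (q ^ j.*2.+1 + 1) * q ^ 2)%N.
  rewrite doubleS -addn2 expnD; case: q q0 {IH} => // r _.
  set X := (r.+1 ^ _)%N; rewrite /= ; nia.
rewrite -(dvdn_addl (q ^ (j.+1).*2.+1 + 1) (dvdn_mulr q.-1 (dvdnn q.+1))) E.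
exact: dvdn_mulr.
Qed.

Section Main.
Variables (F : finFieldType) (q n p : nat).
Hypothesis hq0 : (0 < q)%N.
Hypothesis frob : forall x y : F, (x + y) ^+ q = x ^+ q + y ^+ q.
Hypothesis hpc : (p%:R : F) = 0.
Hypothesis hp1 : (1 < p)%N.
Hypothesis hcop : coprime (p * p) (m_of q n).
Local Notation m := (m_of q n).

Definition Gset (H : {set F * F * F}) (M : {set F}) : {set F * F * F * F} :=
  [set t | [&& Defs.pi t \in H, pi_d t \in M & pi_d t ^+ m == phi (Defs.pi t)]].

Lemma Bm (g : F * F * F * F) : g \in Bcar F q n -> pi_d g ^+ m = phi (Defs.pi g).
Proof.
by case: g => [[[a b] c] d]; rewrite inE => /and5P[_ _ _ _ /andP[_ /eqP]].
Qed.

Lemma key G : is_subgroup_B F q n G -> forall w, w \in G ->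
  phi (Defs.pi w) = 1 -> (Defs.pi w, 1) \in G.
Proof.
case=> GB G1 Gmul _ w wG hphi.
have Bpow_in : forall j, Bpow q w j \in G by elim=> [|j IH] //=; apply: Gmul.
have dm : pi_d w ^+ m = 1 by rewrite Bm ?hphi //; exact: (subsetP GB).
set e := chinese (p * p) m 1 0.
have e1 : e = ((p * p) * (e %/ (p * p))).+1.
  have := chinese_modl hcop 1 0; rewrite -/e (modn_small (_ : 1 < p * p)%N) => [h|]; last by nia.
  by rewrite {1}(divn_eq e (p * p)) h addn1 mulnC.
have e0 : (m %| e)%N by apply/eqP; rewrite /e (chinese_modr hcop 1 0) mod0n.
have := Bpow_in e; rewrite Bpow_pair.
have -> : pi_d w ^+ e = 1 by rewrite -(divnK e0) mulnC exprM dm expr1n.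
suff -> : Apow q (Defs.pi w) e = Defs.pi w by [].
rewrite e1 ApowS Apow_mul // (Apow_pp frob) // Apow_id // Amulx1 //.
Qed.

Lemma Gset_eq G : is_subgroup_B F q n G ->
  G = Gset (@Defs.pi F @: G) (@pi_d F @: G).
Proof.
move=> hG; have [GB G1 Gmul Ginv] := hG.
have Bm' : forall g, g \in G -> pi_d g ^+ m = phi (Defs.pi g).
  by move=> g /(subsetP GB); apply: Bm.
apply/setP => t; rewrite inE; apply/idP/and3P.
- move=> tG; split; [exact: imset_f | exact: imset_f | by rewrite Bm'].
- case=> /imsetP[g1 g1G E1] /imsetP[g2 g2G E2] /eqP Em.
  have [y yG yE] := Ginv g2 g2G.
  set w := Bmul q g1 y.
  have wG : w \in G := Gmul _ _ g1G yG.
  have py : Amul q (Defs.pi y) (Defs.pi g2) = Aid F.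
    by have := congr1 (@Defs.pi F) yE; rewrite Bmul_pair.
  have hw : phi (Defs.pi w) = 1.
    rewrite /w Bmul_pair /= phi_Amul.
    have := congr1 (@phi F) py; rewrite phi_Amul /= => h1.
    by rewrite -E1 -Em E2 Bm' // mulrC.
  have := Gmul _ _ (key hG wG hw) g2G.
  rewrite Bmul_pair /= mul1r /w Bmul_pair /= -AmulA // py Amulx1 // -E1 -E2.
  by case: t {E1 E2 Em}.
Qed.

Lemma Gset_sub H M : Sigma F q n (H, M) ->
  is_subgroup_B F q n (Gset H M) /\ Xi F (Gset H M) = (H, M).
Proof.
case=> [[HA H1 Hmul Hinv] [Mmu M1 Mmul Minv] HM].
split; first split.
- apply/subsetP => [[[[a b] c] d]]; rewrite !inE /= => /and3P[hH dM /eqP E].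
  have := subsetP HA _ hH; rewrite inE /= => /and5P[-> -> -> -> ->].
  by rewrite E /= eqxx.
- rewrite inE; apply/and3P; split; [exact: H1 | exact: M1 | by rewrite /= expr1n].
- move=> x y; rewrite !inE => /and3P[xH xM /eqP xE] /and3P[yH yM /eqP yE].
  rewrite Bmul_pair /=; apply/and3P; split; [exact: Hmul | exact: Mmul |].
  by rewrite exprMn xE yE phi_Amul.
- move=> x; rewrite inE => /and3P[xH xM /eqP xE].
  have [yh yhH yhE] := Hinv _ xH.
  have [yd ydM ydE] := Minv _ xM.
  exists (yh, yd); last by rewrite Bmul_pair /= yhE ydE.
  rewrite inE /=; apply/and3P; split => //.
  have a0 : phi (Defs.pi x) != 0.
    have := subsetP HA _ xH; case: (Defs.pi x) => [[a b] c].
    by rewrite inE => /and5P[].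
  have h1 := congr1 (@phi F) yhE; rewrite phi_Amul /= in h1.
  have h2 := congr1 (fun z => z ^+ m) ydE; rewrite /= exprMn expr1n xE in h2.
  by apply/eqP; apply: (mulIf a0); rewrite h1 h2.
- rewrite /Xi; congr (_, _); apply/setP => x; apply/imsetP/idP.
  + by case=> t; rewrite inE => /and3P[tH _ _] ->.
  + move=> xH; have : phi x \in @phi F @: H by exact: imset_f.
    rewrite -HM => /imsetP[d dM dE].
    by exists (x, d) => //; rewrite inE /= xH dM dE eqxx.
  + by case=> t; rewrite inE => /and3P[_ tM _] ->.
  + move=> xM; have : x ^+ m \in [set d ^+ m | d in M] by exact: imset_f.
    rewrite HM => /imsetP[h hH hE].
    by exists (h, x) => //; rewrite inE /= hH xM hE eqxx.
Qed.

End Main.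

Theorem theorem3p5 (p k n : nat) (F : finFieldType)
  (hp : prime p) (hk : (0 < k)%N) (hn : odd n)
  (hF : #|F| = ((p ^ k) ^ (2 * n))%N) :
  let q := (p ^ k)%N in
  [/\ (forall G, is_subgroup_B F q n G -> Sigma F q n (Xi F G)),
      (forall G1 G2, is_subgroup_B F q n G1 -> is_subgroup_B F q n G2 ->
         Xi F G1 = Xi F G2 -> G1 = G2)
    & (forall HM, Sigma F q n HM ->
         exists2 G, is_subgroup_B F q n G & Xi F G = HM)].
Proof.
move=> q.
have q0 : (0 < q)%N by rewrite expn_gt0 prime_gt0.
have chp : p \in [pchar F].
  by apply: (@card_finPcharP F p (k * (2 * n))) => //; rewrite expnM.
have frob : forall x y : F, (x + y) ^+ q = x ^+ q + y ^+ q.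
  move=> x y; apply: exprDn_pchar.
  by rewrite pnatX (eq_pnat _ (pcharf_eq chp)) pnat_id.
have hpc : (p%:R : F) = 0 := pcharf0 chp.
have hp1 : (1 < p)%N := prime_gt1 hp.
have dvd := dvd_odd q0 hn.
have mE : (m_of q n * (q + 1) = q ^ n + 1)%N by rewrite /m_of divnK.
have hcop : coprime (p * p) (m_of q n).
  rewrite coprimeMl andbb prime_coprime //; apply/negP => pm.
  have : (p %| q ^ n + 1)%N by rewrite -mE dvdn_mulr.
  rewrite dvdn_addr ?dvdn1 => [/eqP p1|]; first by rewrite p1 in hp.
  rewrite /q -expnM; apply: dvdn_exp => //; rewrite muln_gt0 hk odd_gt0 //.
split.
- move=> G hG; have [GB G1 Gmul Ginv] := hG; rewrite /Sigma /Xi; split.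
  + split.
    * apply/subsetP => _ /imsetP[[[[a b] c] d] gG ->].
      have := subsetP GB _ gG; rewrite !inE /= => /and5P[-> -> -> -> /andP[-> _]] //.
    * by apply/imsetP; exists (Bid F).
    * move=> _ _ /imsetP[g gG ->] /imsetP[g' g'G ->]; apply/imsetP.
      by exists (Bmul q g g'); [exact: Gmul | rewrite Bmul_pair].
    * move=> _ /imsetP[g gG ->]; have [y yG yE] := Ginv _ gG.
      exists (Defs.pi y); first exact: imset_f.
      by have := congr1 (@Defs.pi F) yE; rewrite Bmul_pair.
  + split.
    * apply/subsetP => _ /imsetP[[[[a b] c] d] gG ->].
      have := subsetP GB _ gG; rewrite !inE /= => /and5P[a0 aq _ _ /andP[_ /eqP dm]].
      rewrite -mE -mulnA exprM dm.
      have e : (((q + 1) * (q - 1)).+1 = q ^ 2)%N by rewrite expnS expn1; nia.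
      apply/eqP; apply: (mulIf a0); rewrite mul1r -exprSr e; exact/eqP.
    * by apply/imsetP; exists (Bid F).
    * move=> _ _ /imsetP[g gG ->] /imsetP[g' g'G ->]; apply/imsetP.
      by exists (Bmul q g g'); [exact: Gmul | rewrite Bmul_pair].
    * move=> _ /imsetP[g gG ->]; have [y yG yE] := Ginv _ gG.
      exists (pi_d y); first exact: imset_f.
      by have := congr1 (@pi_d F) yE; rewrite Bmul_pair.
  + rewrite -!imset_comp; apply: eq_in_imset => g gG /=.
    by apply: Bm; exact: (subsetP GB).
- move=> G1 G2 h1 h2 E.
  rewrite (Gset_eq q0 frob hpc hp1 hcop h1) (Gset_eq q0 frob hpc hp1 hcop h2).
  by move: E; rewrite /Xi; case=> -> ->.
- move=> [H M] hS; have [hG hX] := Gset_sub hS.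
  by exists (Gset q n H M).
Qed.
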